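(* Let $\mathfrak{X}=(X,\{R_i\}_{i=0}^{d+1})$ be a commutative association scheme with $d\ge 2$, $R_d^\top=R_{d+1}$ and $R_i^\top=R_i$ for $0\le i\le d-1$, whose symmetrization $\tilde{\mathfrak X}=(X,\{\tilde R_i\}_{i=0}^d)$ ($\tilde R_i=R_i$ for $i\le d-1$, $\tilde R_d=R_d\cup R_{d+1}$) is amorphic, with character table of the form: for primitive idempotents $\tilde E_0,\dots,\tilde E_d$ and $\tilde A_i$ the adjacency matrix of $\tilde R_i$ with valency $k_i$, $\tilde A_i\tilde E_0=k_i\tilde E_0$, $\tilde A_i\tilde E_i=b_i\tilde E_i$, $\tilde A_i\tilde E_j=a_i\tilde E_j$ for $1\le j\le d$, $j\ne i$, where $a_i\neq b_i$. Let $\Lambda$ be a nonempty subset of $\{1,2,\ldots,d+1\}$ and $R_\Lambda=\bigcup_{\alpha\in\Lambda}R_\alpha$. If the digraph $(X,R_{\Lambda})$ has $d+2$ distinct eigenvalues, then exactly one element of $\{d,d+1\}$ belongs to $\Lambda$.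
   Context: Association scheme: finite set $X$ with a partition of $X\times X$ into relations $R_0$ (diagonal), $R_1,\dots$, closed under transposition, with constant intersection numbers; commutative if these are symmetric in the lower indices. Adjacency matrices are the $01$-matrices of the relations; primitive idempotents $E_0=J/|X|,\dots$ of the Bose–Mesner algebra satisfy $A_iE_j\in\mathbb C E_j$. A symmetric scheme is amorphic if merging the nondiagonal relations along any partition of their index set into nonempty parts gives an association scheme. Eigenvalues of a digraph $(X,R)$ are those of its $01$ adjacency matrix. *)

(* Defs.v *)
From HB Require Import structures.
From mathcomp Require Import all_boot all_order all_algebra all_field.
Set Implicit Arguments. Unset Strict Implicit. Unset Printing Implicit Defensive.
Import Order.TTheory GRing.Theory Num.Theory.
Local Open Scope ring_scope.

(* The point set X is represented by 'I_n; a scheme with classes R_0..R_{m-1}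
   is represented by its class function c : 'I_n -> 'I_n -> 'I_m,
   with (x,y) \in R_i  <->  c x y = i. *)

Definition pcount n m (c : 'I_n -> 'I_n -> 'I_m) (i j : 'I_m) (x y : 'I_n) : nat :=
  #|[set z | (c x z == i) && (c z y == j)]|.

Definition is_scheme n m (c : 'I_n -> 'I_n -> 'I_m) : Prop :=
  (forall x y, (nat_of_ord (c x y) == 0%N) = (x == y)) /\
  (forall i : 'I_m, exists x y, c x y = i) /\
  (forall i : 'I_m, exists j : 'I_m, forall x y, (c x y == i) = (c y x == j)) /\
  (forall i j k : 'I_m, forall x y x' y', c x y = k -> c x' y' = k ->
     pcount c i j x y = pcount c i j x' y').

Definition is_commutative_scheme n m (c : 'I_n -> 'I_n -> 'I_m) : Prop :=
  is_scheme c /\ forall (i j : 'I_m) x y, pcount c i j x y = pcount c j i x y.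

Definition is_symmetric_scheme n m (c : 'I_n -> 'I_n -> 'I_m) : Prop :=
  is_scheme c /\ forall x y, c x y = c y x.

(* Amorphic: merging the nondiagonal classes along any partition of their
   index set into nonempty parts (encoded by a surjective labelling
   p : 'I_m -> 'I_k with p i = 0 iff i = 0) yields a scheme. *)
Definition is_amorphic n m (c : 'I_n -> 'I_n -> 'I_m) : Prop :=
  is_symmetric_scheme c /\
  forall (k : nat) (p : 'I_m -> 'I_k),
    (forall i, (nat_of_ord (p i) == 0%N) = (nat_of_ord i == 0%N)) ->
    (forall l : 'I_k, exists i, p i = l) ->
    is_scheme (fun x y => p (c x y)).

Definition adjmx n (S : 'I_n -> 'I_n -> bool) : 'M[algC]_n :=
  \matrix_(x, y) (S x y)%:R.

Definition num_distinct_eigenvalues n (A : 'M[algC]_n) (k : nat) : Prop :=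
  exists s : seq algC, [/\ uniq s, size s = k & forall a, eigenvalue A a = (a \in s)].

Definition symmetrize n d (c : 'I_n -> 'I_n -> 'I_d.+2) (x y : 'I_n) : 'I_d.+1 :=
  inord (minn (c x y) d).

Definition prim_idempotents n m (c : 'I_n -> 'I_n -> 'I_m) (E : 'I_m -> 'M[algC]_n) : Prop :=
  (forall j, exists coef : 'I_m -> algC,
      E j = \sum_(i < m) coef i *: adjmx (fun x y => c x y == i)) /\
  (forall j l, E j *m E l = if j == l then E j else 0) /\
  (forall j, E j != 0) /\
  (\sum_(j < m) E j = 1%:M) /\
  (forall j : 'I_m, nat_of_ord j = 0%N -> E j = (n%:R)^-1 *: const_mx 1).

(* Main.v *)
Require Import Defs.
From HB Require Import structures.
From mathcomp Require Import all_boot all_order all_algebra all_field.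
Import Order.TTheory GRing.Theory Num.Theory.
Local Open Scope ring_scope.

Theorem lemma3p3 (n d : nat) (c : 'I_n -> 'I_n -> 'I_d.+2)
  (E : 'I_d.+1 -> 'M[algC]_n) (a b : 'I_d.+1 -> algC) (L : {set 'I_d.+2}) :
  (2 <= d)%N ->
  is_commutative_scheme c ->
  (forall x y, (c x y == inord d) = (c y x == inord d.+1)) ->
  (forall x y, (c x y < d)%N -> c y x = c x y) ->
  is_amorphic (symmetrize c) ->
  prim_idempotents (symmetrize c) E ->
  (forall i : 'I_d.+1, (0 < i)%N ->
     [/\ forall x : 'I_n,
           adjmx (fun u v => symmetrize c u v == i) *m E ord0
           = #|[set y | symmetrize c x y == i]|%:R *: E ord0,
         adjmx (fun u v => symmetrize c u v == i) *m E i = b i *: E i,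
         (forall j : 'I_d.+1, (0 < j)%N -> j != i ->
            adjmx (fun u v => symmetrize c u v == i) *m E j = a i *: E j)
       & a i != b i]) ->
  L != set0 -> ord0 \notin L ->
  num_distinct_eigenvalues (adjmx (fun x y => c x y \in L)) d.+2 ->
  (inord d \in L) != (inord d.+1 \in L).
Proof.
move=> d2 _ _ _ _ [_ [_ [_ [sumE _]]]] Hev _ L0 [s [us ss Hs]].
apply/negP => /eqP HL.
pose P (i : 'I_d.+1) := (inord i : 'I_d.+2) \in L.
pose Ai (i : 'I_d.+1) := adjmx (fun u v => symmetrize c u v == i).
have P0 i : P i -> (0 < i)%N.
  rewrite lt0n; apply: contraTN => /eqP i0.
  rewrite /P i0 (_ : inord 0 = ord0) //; by apply: val_inj; rewrite /= inordK.
have cP x y : (c x y \in L) = P (symmetrize c x y).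
  rewrite /P /symmetrize inordK; last by rewrite ltnS geq_minr.
  case: (ltnP (c x y) d) => hc.
    by rewrite inord_val.
  have := ltn_ord (c x y); rewrite ltnS leq_eqVlt ltnS => /orP [/eqP e|h].
    by rewrite HL; congr (_ \in L); apply: val_inj; rewrite /= inordK // e.
  have e : nat_of_ord (c x y) = d by apply/eqP; rewrite eqn_leq h hc.
  by congr (_ \in L); apply: val_inj; rewrite /= inordK // e.
have AE : adjmx (fun x y => c x y \in L) = \sum_(i | P i) Ai i.
  apply/matrixP => x y; rewrite summxE !mxE cP.
  case: (boolP (P _)) => hp.
    rewrite (bigD1 (symmetrize c x y)) //= big1 ?addr0 ?mxE ?eqxx //.
    by move=> i /andP [_ hi]; rewrite mxE eq_sym (negbTE hi).
  by rewrite big1 // => i hi; rewrite mxE; case: eqP => // e; by move: hp; rewrite e hi.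
have ex j : exists th, adjmx (fun x y => c x y \in L) *m E j = th *: E j.
  have : forall i : 'I_d.+1, exists l, (0 < i)%N -> Ai i *m E j = l *: E j.
    move=> i; case: (posnP i) => [i0|ip]; first by exists 0.
    have [h0 hb ha _] := Hev i ip.
    case: (posnP j) => [j0|jp].
      have [x0 _|none] := pickP (fun _ : 'I_n => true).
        exists #|[set y | symmetrize c x0 y == i]|%:R => _.
        by rewrite (_ : j = ord0) ?h0 //; apply: val_inj.
      exists 0 => _; apply/matrixP => u v; by have := none u.
    case: (eqVneq j i) => [->|ji]; first by exists (b i).
    by exists (a i) => _; apply: ha.
  case/fin_all_exists => l Hl.
  exists (\sum_(i | P i) l i); rewrite AE mulmx_suml scaler_suml.
  by apply: eq_bigr => i /P0 /Hl.
have [th Hth] := fin_all_exists ex.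
have sub : {subset s <= [seq th j | j <- enum 'I_d.+1]}.
  move=> z; rewrite -Hs => /eigenvalueP [v hv vn0].
  have [j hj] : exists j, v *m E j != 0.
    have vs : v = \sum_(j < d.+1) v *m E j.
      by rewrite -mulmx_sumr sumE mulmx1.
    apply/existsP; move: vn0; apply: contraR => /existsPn h.
    rewrite vs big1 ?eqxx // => j _; apply/eqP; by move: (h j); rewrite negbK.
  have : z *: (v *m E j) = th j *: (v *m E j).
    by rewrite scalemxAl -hv -mulmxA Hth -scalemxAr.
  move/eqP; rewrite -subr_eq0 -scalerBl scaler_eq0 (negbTE hj) orbF subr_eq0.
  by move/eqP ->; apply: map_f; rewrite mem_enum.
have := uniq_leq_size us sub; rewrite ss size_map size_enum_ord.
by rewrite ltnn.
Qed.
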